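(* Let $a_1,\dots,a_n\in\mathbb{F}$ and $r_1,\dots,r_n\in\mathbb{Z}_+$ be such that $\Omega=\{(x-a_1)^{r_1},\dots,(x-a_n)^{r_n}\}\subseteq\mathbb{F}[x;\sigma,\delta]$ has size $n$. (1) If $\Omega$ is P-independent, then so is $\{(x-a_1)^{s_1},\dots,(x-a_n)^{s_n}\}$ for all $s_1,\dots,s_n\in\mathbb{Z}_+$ with $s_i\le r_i$ for all $i$. (2) If $\Omega$ is P-independent, then the set $\{a_1,\dots,a_n\}\subseteq\mathbb{F}$ has size $n$ and is P-independent.
   Context: Let $\mathbb{F}$ be a division ring, $\sigma$ a ring endomorphism of $\mathbb{F}$ and $\delta$ a $\sigma$-derivation; $\mathbb{F}[x;\sigma,\delta]$ is the skew polynomial ring with $xa=\sigma(a)x+\delta(a)$ (a domain with right Euclidean division). For a set $\Omega$ of skew polynomials, $I(\Omega)$ is the left ideal of skew polynomials right-divisible by every element of $\Omega$, $F_\Omega$ its monic generator of minimal degree (or $0$ if $I(\Omega)=\{0\}$). $\Omega$ is P-independent if it is finite, $I(\Omega)\ne\{0\}$ and $\deg F_\Omega=\sum_{P\in\Omega}\deg P$. A finite set $\{b_1,\dots,b_k\}\subseteq\mathbb{F}$ of distinct elements is P-independent if $\{x-b_1,\dots,x-b_k\}$ is. *)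

(* Defs.v *)
(* Skew polynomial ring F[x; sigma, delta] over a division ring F,
   represented on the coefficient sequences {poly F} (additive structure of
   {poly F}), with its own skew multiplication [skmul]. *)
From HB Require Import structures.
From mathcomp Require Import all_boot all_order all_algebra.
From mathcomp Require Import finmap.
Set Implicit Arguments.
Unset Strict Implicit.
Unset Printing Implicit Defensive.
Import Order.TTheory GRing.Theory.
Local Open Scope ring_scope.


Section Skew.
Variable F : unitRingType.
Variables (sigma delta : F -> F).

Definition is_division_ring := forall a : F, a != 0 -> a \is a GRing.unit.

Definition is_sigma_derivation :=
  (forall a b : F, delta (a + b) = delta a + delta b) /\
  (forall a b : F, delta (a * b) = sigma a * delta b + delta a * b).

(* left multiplication by x:  x * (sum a_i x^i) = sum (sigma(a_i) x + delta(a_i)) x^i *)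
Definition skX (p : {poly F}) : {poly F} :=
  map_poly sigma p * 'X + map_poly delta p.

Definition skmul (p q : {poly F}) : {poly F} :=
  \sum_(i < size p) p`_i *: iter i skX q.

Definition skexp (p : {poly F}) (n : nat) : {poly F} := iter n (skmul p) 1.

Definition skrdvd (P Q : {poly F}) : Prop := exists R, Q = skmul R P.

Definition inI (Om : {fset {poly F}}) (Q : {poly F}) : Prop :=
  forall P, P \in Om -> skrdvd P Q.

Definition is_F_Omega (Om : {fset {poly F}}) (G : {poly F}) : Prop :=
  [/\ G \is monic, inI Om G & forall Q, Q != 0 -> inI Om Q -> (size G <= size Q)%N].

Definition Pindependent (Om : {fset {poly F}}) : Prop :=
  (exists Q, Q != 0 /\ inI Om Q) /\
  exists G, is_F_Omega Om G /\ (size G).-1 = (\sum_(P <- Om) (size P).-1)%N.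

Definition Pindependent_elts (B : {fset F}) : Prop :=
  Pindependent [fset ('X - b%:P) | b in B]%fset.

End Skew.

(* Main.v *)
Require Import Defs.
From HB Require Import structures.
From mathcomp Require Import all_boot all_order all_algebra.
From mathcomp Require Import finmap.
From mathcomp Require Import fingroup perm.
From mathcomp Require Import zify.
Import GRing.Theory.
Local Open Scope ring_scope.

Section FS.
Local Open Scope fset_scope.
Lemma ordfset_card n : #|` [fset i | i : 'I_n]| = n.
Proof.
rewrite card_imfset //=; transitivity (size (enum 'I_n)); last exact: size_enum_ord.
apply: perm_size.
apply: uniq_perm; rewrite ?enum_finmem_uniq ?enum_uniq // => x; rewrite enum_finmemE mem_enum.
Qed.
Lemma card_inj n (T: choiceType) (f : 'I_n -> T) : #|` [fset f i | i : 'I_n]| = n -> injective f.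
Proof.
have -> : [fset f i | i : 'I_n] = f @` [fset i | i : 'I_n] by rewrite -imfset_comp.
move=> h; have /card_in_imfsetP hi : #|` f @` [fset i | i : 'I_n]| == #|` [fset i | i : 'I_n]|.
  by rewrite h ordfset_card.
by move=> x y e; apply: hi => //; rewrite in_imfset.
Qed.
Lemma sum_inj n (T: choiceType) (f : 'I_n -> T) (g : T -> nat) : injective f ->
  (\sum_(P <- [fset f i | i : 'I_n]) g P = \sum_i g (f i))%N.
Proof.
move=> hf; rewrite big_imfset /=; last by move=> x y _ _; apply: hf.
apply: perm_big; apply: uniq_perm; rewrite ?enum_finmem_uniq ?index_enum_uniq ?enum_uniq // => x.
by rewrite mem_enum mem_index_enum.
Qed.
Lemma card_inj2 n (T: choiceType) (f : 'I_n -> T) : injective f -> #|` [fset f i | i : 'I_n]| = n.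
Proof.
move=> hf; have -> : [fset f i | i : 'I_n] = f @` [fset i | i : 'I_n] by rewrite -imfset_comp.
by rewrite card_in_imfset ?ordfset_card // => x y _ _; apply: hf.
Qed.

End FS.

Section Skew.
Variable F : unitRingType.
Hypothesis hF : is_division_ring F.
Variable sigma : {rmorphism F -> F}.
Variable delta : F -> F.
Hypothesis hd : is_sigma_derivation sigma delta.

Local Notation sX := (skX sigma delta).
Local Notation sm := (skmul sigma delta).

Lemma deltaD a b : delta (a + b) = delta a + delta b. Proof. by case: hd. Qed.
Lemma deltaM a b : delta (a * b) = sigma a * delta b + delta a * b. Proof. by case: hd. Qed.
Lemma delta0 : delta 0 = 0.
Proof. by apply: (addrI (delta 0)); rewrite addr0 -deltaD addr0. Qed.
Lemma delta1 : delta 1 = 0.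
Proof.
have h := deltaM 1 1; rewrite rmorph1 !mul1r mulr1 in h.
by apply: (addrI (delta 1)); rewrite addr0 -h.
Qed.

Lemma coef_skX p k : (sX p)`_k = (if k is k'.+1 then sigma p`_k' else 0) + delta p`_k.
Proof.
rewrite /skX coefD coefMX !coef_map_id0 ?delta0 ?rmorph0 //; by case: k.
Qed.

Lemma skXD p q : sX (p + q) = sX p + sX q.
Proof.
apply/polyP => k; rewrite coefD !coef_skX coefD deltaD.
case: k => [|k]; rewrite ?coefD ?rmorphD ?add0r //.
by rewrite addrACA.
Qed.

Lemma skX0 : sX 0 = 0.
Proof. apply/polyP => k; rewrite coef_skX coef0 delta0; case: k => [|k]; rewrite ?coef0 ?rmorph0 ?addr0 //. Qed.

Lemma skXZ c p : sX (c *: p) = sigma c *: sX p + delta c *: p.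
Proof.
apply/polyP => k; rewrite coef_skX [RHS]coefD; case: k => [|k]; rewrite !coefZ coef_skX deltaM mulrDr addrA ?rmorphM ?mulr0 ?add0r //.
Qed.

Lemma skX_sum I (r : seq I) (P : pred I) (f : I -> {poly F}) :
  sX (\sum_(i <- r | P i) f i) = \sum_(i <- r | P i) sX (f i).
Proof. exact: (big_morph _ skXD skX0). Qed.

Lemma iterD i (p q : {poly F}) : iter i sX (p + q) = iter i sX p + iter i sX q.
Proof. by elim: i => //= i ->; rewrite skXD. Qed.
Lemma iter0 i : iter i sX 0 = 0.
Proof. by elim: i => //= i ->; rewrite skX0. Qed.

Lemma skmul_def N (p q : {poly F}) : (size p <= N)%N -> sm p q = \sum_(i < N) p`_i *: iter i sX q.
Proof.
move=> hN; rewrite /skmul (big_ord_widen N (fun i => p`_i *: iter i sX q) hN) big_mkcond /=.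
apply: eq_bigr => i _; case: ifP => // /negbT; rewrite -leqNgt => h.
by rewrite nth_default // scale0r.
Qed.

Lemma skmul0l (q : {poly F}) : sm 0 q = 0.
Proof. by rewrite /skmul size_poly0 big_ord0. Qed.

Lemma skmulDl (p q r : {poly F}) : sm (p + q) r = sm p r + sm q r.
Proof.
set N := maxn (size p) (size q).
rewrite (@skmul_def N _ r (size_polyD p q)) (@skmul_def N p r (leq_maxl _ _)) (@skmul_def N q r (leq_maxr _ _)).
by rewrite -big_split; apply: eq_bigr => i _; rewrite coefD scalerDl.
Qed.

Lemma skmulZl c (p q : {poly F}) : sm (c *: p) q = c *: sm p q.
Proof.
rewrite (@skmul_def (size p) _ q (size_scale_leq c p)) (@skmul_def (size p) p q (leqnn _)).
by rewrite scaler_sumr; apply: eq_bigr => i _; rewrite coefZ scalerA.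
Qed.

Lemma skmul_sumL I (r : seq I) (P : pred I) (f : I -> {poly F}) q :
  sm (\sum_(i <- r | P i) f i) q = \sum_(i <- r | P i) sm (f i) q.
Proof. exact: (big_morph (fun p => sm p q) (fun p1 p2 => skmulDl p1 p2 q) (skmul0l q)). Qed.

Lemma skmulXn j (q : {poly F}) : sm ('X^j) q = iter j sX q.
Proof.
rewrite (@skmul_def j.+1 _ q (eq_leq (size_polyXn F j))) big_ord_recr /= coefXn eqxx scale1r.
rewrite big1 ?add0r // => i _; by rewrite coefXn /= (ltn_eqF (ltn_ord i)) scale0r.
Qed.

Lemma skmul1l (q : {poly F}) : sm 1 q = q.
Proof. by rewrite -(expr0 'X) skmulXn. Qed.

Lemma skmulr0 (p : {poly F}) : sm p 0 = 0.
Proof. by rewrite /skmul big1 // => i _; rewrite iter0 scaler0. Qed.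

Lemma skmulDr (p q r : {poly F}) : sm p (q + r) = sm p q + sm p r.
Proof. by rewrite /skmul -big_split; apply: eq_bigr => i _; rewrite iterD scalerDr. Qed.

Lemma db (b : bool) : delta b%:R = 0.
Proof. by case: b; rewrite ?delta1 ?delta0. Qed.
Lemma sb (b : bool) : sigma b%:R = b%:R.
Proof. by case: b; rewrite ?rmorph1 ?rmorph0. Qed.

Lemma skX_Xn i : sX ('X^i : {poly F}) = 'X^(i.+1).
Proof.
apply/polyP => k; rewrite coef_skX !coefXn db addr0.
by case: k => [|k] //=; rewrite coefXn sb eqSS.
Qed.

Lemma skmulr1 (p : {poly F}) : sm p 1 = p.
Proof.
have e : forall i, iter i sX 1 = 'X^i by elim=> //= i ->; rewrite skX_Xn.
rewrite /skmul; under eq_bigr do rewrite e.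
by rewrite -poly_def coefK.
Qed.

Lemma size_skX_leq (p : {poly F}) : (size (sX p) <= (size p).+1)%N.
Proof.
apply/leq_sizeP => j hj; rewrite coef_skX; case: j hj => [//|j] hj.
by rewrite !nth_default ?rmorph0 ?delta0 ?addr0 //; apply: ltnW.
Qed.

Lemma skX_mul (q r : {poly F}) : sX (sm q r) = sm (sX q) r.
Proof.
rewrite (@skmul_def (size q).+1 _ r (size_skX_leq q)) /skmul skX_sum.
under eq_bigr do rewrite skXZ.
under [RHS]eq_bigr do rewrite coef_skX scalerDl.
rewrite !big_split /= big_ord_recl [X in _ = _ + X]big_ord_recr /= nth_default // delta0 !scale0r add0r addr0.
by congr (_ + _); apply: eq_bigr => i _; rewrite lift0.
Qed.

Lemma iter_mul i (q r : {poly F}) : iter i sX (sm q r) = sm (iter i sX q) r.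
Proof. by elim: i => //= i ->; rewrite skX_mul. Qed.

Lemma skmulA (p q r : {poly F}) : sm (sm p q) r = sm p (sm q r).
Proof.
rewrite [sm p q]/skmul skmul_sumL [RHS]/skmul.
by apply: eq_bigr => i _; rewrite skmulZl -iter_mul.
Qed.


Lemma sigma_eq0 c : sigma c = 0 -> c = 0.
Proof.
move=> h; case: (eqVneq c 0) => // /hF /(rmorph_unit sigma).
by rewrite h unitr0.
Qed.

Lemma itsigma_eq0 k c : iter k sigma c = 0 -> c = 0.
Proof. by elim: k => //= k IH /sigma_eq0 /IH. Qed.

Lemma itsigma1 k : iter k sigma 1 = 1.
Proof. by elim: k => //= k ->; rewrite rmorph1. Qed.

Lemma mulf_neq0' (x y : F) : x != 0 -> y != 0 -> x * y != 0.
Proof.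
move=> nx; apply: contra => /eqP h; apply/eqP.
by rewrite -(mulKr (hF _ nx) y) h mulr0.
Qed.

Lemma size_sum_leq I (r : seq I) (P : pred I) (f : I -> {poly F}) m :
  (forall i, P i -> (size (f i) <= m)%N) -> (size (\sum_(i <- r | P i) f i)%R <= m)%N.
Proof.
move=> h; apply: (big_ind (fun x : {poly F} => size x <= m)%N) => //.
  by rewrite size_poly0.
by move=> x y hx hy; apply: leq_trans (size_polyD x y) _; rewrite geq_max hx hy.
Qed.

Lemma size_lead_skX (p : {poly F}) : p != 0 ->
  size (sX p) = (size p).+1 /\ lead_coef (sX p) = sigma (lead_coef p).
Proof.
move=> pn0; have sp : size p = (size p).-1.+1 by rewrite prednK // size_poly_gt0.
have c : (sX p)`_(size p) = sigma (lead_coef p).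
  by rewrite coef_skX {1}sp (nth_default _ (leqnn _)) delta0 addr0.
have ne : (sX p)`_(size p) != 0.
  by rewrite c; apply/eqP => /sigma_eq0 /eqP; rewrite lead_coef_eq0 (negPf pn0).
have e : size (sX p) = (size p).+1.
  apply/eqP; rewrite eqn_leq size_skX_leq /=; rewrite ltnNge; apply/negP => h.
  by move: ne; rewrite nth_default ?eqxx.
by split => //; rewrite lead_coefE e /=.
Qed.

Lemma size_lead_iter k (p : {poly F}) : p != 0 ->
  size (iter k sX p) = (size p + k)%N /\ lead_coef (iter k sX p) = iter k sigma (lead_coef p).
Proof.
move=> pn0; elim: k => [|k [IH1 IH2]] /=; first by rewrite addn0.
have nz : iter k sX p != 0 by rewrite -size_poly_gt0 IH1 addn_gt0 size_poly_gt0 pn0.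
by have [-> ->] := @size_lead_skX _ nz; rewrite IH1 IH2 addnS.
Qed.

Lemma iter_neq0 k (p : {poly F}) : p != 0 -> iter k sX p != 0.
Proof.
move=> pn0; have [h _] := @size_lead_iter k _ pn0.
by rewrite -size_poly_gt0 h addn_gt0 size_poly_gt0 pn0.
Qed.

Lemma size_lead_skmul (p q : {poly F}) : p != 0 -> q != 0 ->
  size (sm p q) = (size p + size q).-1 /\
  lead_coef (sm p q) = lead_coef p * iter (size p).-1 sigma (lead_coef q).
Proof.
move=> pn0 qn0; set d := (size p).-1.
have sp : size p = d.+1 by rewrite prednK // size_poly_gt0.
rewrite (@skmul_def d.+1 p q (eq_leq sp)) big_ord_recr /=.
have [s1 l1] := @size_lead_iter d _ qn0.
have lp : p`_d != 0 by rewrite -lead_coef_eq0 in pn0; rewrite lead_coefE sp /= in pn0.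
have reg : GRing.lreg p`_d by apply: mulrI; exact: hF.
have sT : size (p`_d *: iter d sX q) = (size q + d)%N by rewrite lreg_size.
have sS : (size (\sum_(i < d) p`_i *: iter i sX q)%R < size q + d)%N.
  have sq : (0 < size q)%N by rewrite size_poly_gt0.
  case: d {sp reg sT s1 l1 lp} => [|d]; first by rewrite big_ord0 size_poly0 addn0.
  rewrite addnS ltnS; apply: size_sum_leq => i _.
  apply: leq_trans (size_scale_leq _ _) _.
  have [-> _] := @size_lead_iter i _ qn0; rewrite leq_add2l.
  by rewrite -ltnS ltn_ord.
rewrite addrC size_polyDl ?sT // addrC lead_coefDr ?sT // lead_coef_lreg // l1.
by split => //; rewrite sp addSn addnC.
Qed.

Lemma skmul_neq0 (p q : {poly F}) : p != 0 -> q != 0 -> sm p q != 0.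
Proof.
move=> pn0 qn0; have [_ h] := @size_lead_skmul _ _ pn0 qn0.
rewrite -lead_coef_eq0 h; apply: mulf_neq0'; first by rewrite lead_coef_eq0.
by apply/eqP => /itsigma_eq0 /eqP; rewrite lead_coef_eq0 (negPf qn0).
Qed.

Lemma skmul_size (p q : {poly F}) : p != 0 -> q != 0 ->
  ((size (sm p q)).-1 = (size p).-1 + (size q).-1)%N.
Proof.
move=> pn0 qn0; have [-> _] := @size_lead_skmul _ _ pn0 qn0.
move: pn0 qn0; rewrite -!size_poly_gt0; lia.
Qed.

Lemma skexp_lin (b : F) m :
  skexp sigma delta ('X - b%:P) m \is monic /\ size (skexp sigma delta ('X - b%:P) m) = m.+1.
Proof.
elim: m => [|m [IH1 IH2]]; first by rewrite /= monic1 size_poly1.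
have nz1 := monic_neq0 (monicXsubC b); have nz2 := monic_neq0 IH1.
rewrite /skexp /= -/(skexp sigma delta _ m) monicE.
have [-> ->] := @size_lead_skmul _ _ nz1 nz2.
rewrite size_XsubC IH2; split => //.
by rewrite (eqP (monicXsubC b)) mul1r (eqP IH1) itsigma1.
Qed.

Lemma skexp_add (p : {poly F}) m k :
  skexp sigma delta p (m + k) = sm (skexp sigma delta p m) (skexp sigma delta p k).
Proof.
elim: m => [|m IH]; first by rewrite /= skmul1l.
by rewrite addSn /skexp /= -!/(skexp sigma delta _ _) IH skmulA.
Qed.

Lemma euclid (T : {poly F}) m : T \is monic -> forall A : {poly F}, (size A <= m)%N ->
  exists D rho, A = sm D T + rho /\ (size rho < size T)%N.
Proof.
move=> Tm; have Tn0 := monic_neq0 Tm.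
elim: m => [|m IH] A hA.
  exists 0, A; rewrite skmul0l add0r; split => //.
  by move: hA; rewrite size_poly_leq0 => /eqP ->; rewrite size_poly0 size_poly_gt0.
case: (ltnP (size A) (size T)) => hAT.
  by exists 0, A; rewrite skmul0l add0r.
case: (ltnP (size A) m.+1) => hm; first by apply: IH.
have eA : size A = m.+1 by apply/eqP; rewrite eqn_leq hA hm.
set k := (m.+1 - size T)%N.
have [s1 l1] := @size_lead_iter k _ Tn0.
rewrite (eqP Tm) itsigma1 in l1.
have s1' : size (iter k sX T) = m.+1 by rewrite s1 /k subnKC // -eA.
set B := lead_coef A *: iter k sX T.
have hB : (size (A - B)%R <= m)%N.
  apply/leq_sizeP => j hj; rewrite coefB coefZ.
  case: (ltnP m j) => hmj.
    by rewrite !nth_default ?mulr0 ?subr0 // ?s1' ?eA.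
  have -> : j = m by apply/eqP; rewrite eqn_leq hmj hj.
  move: l1; rewrite lead_coefE s1' /= => ->.
  by rewrite lead_coefE eA /= mulr1 subrr.
have [D [rho [e1 e2]]] := IH _ hB.
exists (lead_coef A *: 'X^k + D), rho; split => //.
rewrite skmulDl skmulZl skmulXn -/B -addrA -e1.
by rewrite addrC subrK.
Qed.

Lemma dep_last d (v : 'I_d.+2 -> {poly F}) :
  (forall j, (size (v j) <= d.+1)%N) -> (v ord_max)`_d != 0 ->
  (forall w : 'I_d.+1 -> {poly F}, (forall j, (size (w j) <= d)%N) ->
     exists c : 'I_d.+1 -> F, (exists j, c j != 0) /\ \sum_j c j *: w j = 0) ->
  exists c : 'I_d.+2 -> F, (exists j, c j != 0) /\ \sum_j c j *: v j = 0.
Proof.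
move=> hv piv IH.
set pi := ((v ord_max)`_d)^-1.
set m := fun i : 'I_d.+1 => (v (widen_ord (leqnSn _) i))`_d * pi.
set w := fun i : 'I_d.+1 => v (widen_ord (leqnSn _) i) - m i *: v ord_max.
have hw : forall j, (size (w j) <= d)%N.
  move=> j; apply/leq_sizeP => k hk; rewrite coefB coefZ.
  case: (ltnP d k) => hdk.
    by rewrite !nth_default ?mulr0 ?subr0 //; apply: leq_trans (hv _) hdk.
  have -> : k = d by apply/eqP; rewrite eqn_leq hdk hk.
  by rewrite /m -mulrA mulVr ?mulr1 ?subrr //; exact: hF.
have [c [[j0 cj0] hc]] := IH w hw.
exists (fun j : 'I_d.+2 => if (j < d.+1)%N then c (inord j) else - \sum_i c i * m i).
split.
  by exists (widen_ord (leqnSn _) j0); rewrite /= ltn_ord inord_val.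
rewrite big_ord_recr /= ltnn.
under eq_bigr do rewrite ltn_ord inord_val.
move: hc; rewrite (eq_bigr (fun i => c i *: v (widen_ord (leqnSn _) i) - (c i * m i) *: v ord_max)); last first.
  by move=> i _; rewrite /w scalerBr scalerA.
rewrite sumrB -scaler_suml => /eqP; rewrite subr_eq0 => /eqP ->.
by rewrite scaleNr subrr.
Qed.

Lemma dep d : forall v : 'I_d.+1 -> {poly F}, (forall j, (size (v j) <= d)%N) ->
  exists c : 'I_d.+1 -> F, (exists j, c j != 0) /\ \sum_j c j *: v j = 0.
Proof.
elim: d => [|d IH] v hv.
  exists (fun _ => 1); split; first by exists ord0; rewrite oner_neq0.
  by rewrite big1 // => j _; move: (hv j); rewrite size_poly_leq0 => /eqP ->; rewrite scaler0.
case: (boolP [exists j, (v j)`_d != 0]) => [/existsP [j0 hj0]|].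
  pose s := tperm j0 ord_max.
  have piv : (v (s ord_max))`_d != 0 by rewrite tpermR.
  have [c [[j cj] hc]] := @dep_last d (fun j => v (s j)) (fun j => hv _) piv IH.
  exists (fun j => c (s j)); split; first by exists (s j); rewrite tpermK.
  by rewrite (reindex_inj (@perm_inj _ s)) /=; under eq_bigr do rewrite tpermK.
rewrite negb_exists => /forallP hn.
have hw : forall j : 'I_d.+1, (size (v (widen_ord (leqnSn _) j)) <= d)%N.
  move=> j; apply/leq_sizeP => k hk; case: (ltnP d k) => hdk.
    by rewrite nth_default //; apply: leq_trans (hv _) hdk.
  have -> : k = d by apply/eqP; rewrite eqn_leq hdk hk.
  by apply/eqP; rewrite -[_ == 0]negbK hn.
have [c [[j0 cj0] hc]] := IH _ hw.
exists (fun j : 'I_d.+2 => if (j < d.+1)%N then c (inord j) else 0).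
split.
  by exists (widen_ord (leqnSn _) j0); rewrite /= ltn_ord inord_val.
rewrite big_ord_recr /= ltnn scale0r addr0 -[RHS]hc.
by apply: eq_bigr => i _; rewrite ltn_ord inord_val.
Qed.

Lemma pair_lcm (T U : {poly F}) : T \is monic ->
  exists R S : {poly F}, R != 0 /\ ((size R).-1 <= (size T).-1)%N /\ sm R U = sm S T.
Proof.
move=> Tm; have Tn0 := monic_neq0 Tm.
set d := (size T).-1.
have sT : size T = d.+1 by rewrite prednK // size_poly_gt0.
have hE : forall j : 'I_d.+1, exists DR : {poly F} * {poly F},
    iter j sX U = sm DR.1 T + DR.2 /\ (size DR.2 <= d)%N.
  move=> j; have [D [rho [e1 e2]]] := @euclid T (size (iter j sX U)) Tm _ (leqnn _).
  by exists (D, rho); split => //; rewrite -ltnS -sT.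
have [f hf] := fin_all_exists hE.
have [c [[j0 cj0] hc]] := @dep d (fun j => (f j).2) (fun j => (hf j).2).
exists (\sum_(j < d.+1) c j *: 'X^j), (\sum_(j < d.+1) c j *: (f j).1).
split; last split.
- apply/eqP => /(congr1 (fun p : {poly F} => p`_j0)); rewrite coef_sum coef0.
  rewrite (bigD1 j0) //= coefZ coefXn eqxx mulr1 big1 ?addr0; first by apply/eqP.
  by move=> i ne; rewrite coefZ coefXn; case: eqP => [/val_inj e|]; rewrite ?mulr0 //; move: ne; rewrite e eqxx.
- rewrite -ltnS prednK; first by apply: size_sum_leq => j _; apply: leq_trans (size_scale_leq _ _) _; rewrite size_polyXn.
  rewrite size_poly_gt0; apply/eqP => /(congr1 (fun p : {poly F} => p`_j0)); rewrite coef_sum coef0.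
  rewrite (bigD1 j0) //= coefZ coefXn eqxx mulr1 big1 ?addr0; first by apply/eqP.
  by move=> i ne; rewrite coefZ coefXn; case: eqP => [/val_inj e|]; rewrite ?mulr0 //; move: ne; rewrite e eqxx.
- rewrite !skmul_sumL; under eq_bigr do rewrite skmulZl skmulXn (hf _).1 scalerDr.
  by rewrite big_split /= hc addr0; apply: eq_bigr => j _; rewrite skmulZl.
Qed.

Lemma gen_lcm (X : eqType) (s : seq X) (U T : X -> {poly F}) :
  (forall x, T x \is monic) ->
  exists R : {poly F}, R != 0 /\ ((size R).-1 <= \sum_(x <- s) (size (T x)).-1)%N /\
    forall x, x \in s -> exists S, sm R (U x) = sm S (T x).
Proof.
move=> hT; elim: s => [|x s [R0 [R0n [R0s R0d]]]].
  by exists 1; split; [exact: oner_neq0 | split => //; rewrite size_poly1].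
have [R' [S' [R'n [R's e]]]] := @pair_lcm (T x) (sm R0 (U x)) (hT x).
exists (sm R' R0); split; first exact: skmul_neq0.
split.
  by rewrite skmul_size // big_cons; apply: leq_add.
move=> y; rewrite in_cons => /orP [/eqP ->|ys].
  by exists S'; rewrite skmulA e.
have [S0 e0] := R0d y ys.
by exists (sm R' S0); rewrite skmulA e0 skmulA.
Qed.

Lemma main_sec (n : nat) (a : 'I_n -> F) (r : 'I_n -> nat) (hr : forall i, (0 < r i)%N)
  (hsize : #|` [fset skexp sigma delta ('X - (a i)%:P) (r i) | i : 'I_n]%fset | = n) :
  Pindependent sigma delta [fset skexp sigma delta ('X - (a i)%:P) (r i) | i : 'I_n]%fset ->
  (forall s : 'I_n -> nat, (forall i, 0 < s i <= r i)%N ->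
     Pindependent sigma delta [fset skexp sigma delta ('X - (a i)%:P) (s i) | i : 'I_n]%fset)
  /\
  (#|` [fset a i | i : 'I_n]%fset | = n /\
   Pindependent_elts sigma delta [fset a i | i : 'I_n]%fset).
Proof.
move=> [_ [G [[Gm GI Gmin] Gsz]]].
pose P (k : 'I_n -> nat) i := skexp sigma delta ('X - (a i)%:P) (k i).
have Pmon k i : P k i \is monic := (skexp_lin _ _).1.
have Psz k i : size (P k i) = (k i).+1 := (skexp_lin _ _).2.
have injr := @card_inj _ _ _ hsize.
rewrite (@sum_inj _ _ _ _ injr) in Gsz.
have Gsz' : (size G).-1 = (\sum_i r i)%N by rewrite Gsz; apply: eq_bigr => i _; rewrite Psz.
have LB : forall Q, Q != 0 -> (forall i, skrdvd sigma delta (P r i) Q) ->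
    (\sum_i r i <= (size Q).-1)%N.
  move=> Q Qn hQ; have := Gmin Q Qn; rewrite Gsz' in Gsz; move: Gsz'.
  have hI : inI sigma delta [fset P r i | i : 'I_n]%fset Q by move=> X /imfsetP [/= i _ ->].
  move=> Gsz' /(_ hI); lia.
have A : forall s, (forall i, 0 < s i <= r i)%N -> forall Q, Q != 0 ->
    (forall i, skrdvd sigma delta (P s i) Q) -> (\sum_i s i <= (size Q).-1)%N.
  move=> s hs Q Qn hQ.
  have [U hU] := fin_all_exists hQ.
  have [R [Rn [Rs RS]]] := @gen_lcm _ (index_enum 'I_n) U
      (fun i => skexp sigma delta ('X - (a i)%:P) (r i - s i)) (fun i => (skexp_lin _ _).1).
  have hQ' : forall i, skrdvd sigma delta (P r i) (sm R Q).
    move=> i; have [S e] := RS i (mem_index_enum i).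
    exists S; rewrite (hU i) -skmulA e skmulA /P -skexp_add subnK //.
    by case/andP: (hs i).
  have := LB _ (@skmul_neq0 _ _ Rn Qn) hQ'; rewrite skmul_size //.
  have Rs' : ((size R).-1 <= \sum_i (r i - s i))%N.
    by apply: leq_trans Rs _; rewrite leq_eqVlt; apply/orP; left; apply/eqP;
      apply: eq_bigr => i _; rewrite (skexp_lin _ _).2.
  have : (\sum_i r i = \sum_i (r i - s i) + \sum_i s i)%N.
    by rewrite -big_split; apply: eq_bigr => i _ /=; rewrite subnK //; case/andP: (hs i).
  lia.
have B : forall s, (forall i, 0 < s i <= r i)%N -> injective (P s).
  move=> s hs i j e; case: (eqVneq i j) => // nij; exfalso.
  have [R [Rn [Rs RS]]] := @gen_lcm _ [seq k <- index_enum 'I_n | k != j] (fun _ => 1) (P s) (Pmon s).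
  have hR : forall k, skrdvd sigma delta (P s k) R.
    move=> k; case: (eqVneq k j) => [->|nkj].
      have /RS [S e'] : i \in [seq k <- index_enum 'I_n | k != j] by rewrite mem_filter nij mem_index_enum.
      by exists S; rewrite -e -e' skmulr1.
    have /RS [S e'] : k \in [seq k <- index_enum 'I_n | k != j] by rewrite mem_filter nkj mem_index_enum.
    by exists S; rewrite -e' skmulr1.
  have := A s hs R Rn hR.
  rewrite big_filter in Rs.
  have Rs' : ((size R).-1 <= \sum_(k | k != j) s k)%N.
    by apply: leq_trans Rs _; rewrite leq_eqVlt; apply/orP; left; apply/eqP;
      apply: eq_bigr => k _; rewrite Psz.
  rewrite (bigD1 j) //=; case/andP: (hs j) => h1 _ h; have := leq_trans h Rs'; rewrite -[X in (_ <= X)%N]add0n leq_add2r leqn0 => /eqP e0; by rewrite e0 in h1.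
have C : forall s, (forall i, 0 < s i <= r i)%N ->
    Pindependent sigma delta [fset P s i | i : 'I_n]%fset.
  move=> s hs.
  have [R [Rn [Rs RS]]] := @gen_lcm _ (index_enum 'I_n) (fun _ => 1) (P s) (Pmon s).
  have hR : forall k, skrdvd sigma delta (P s k) R.
    move=> k; have [S e'] := RS k (mem_index_enum k).
    by exists S; rewrite -e' skmulr1.
  have lo := A s hs R Rn hR.
  have Rs' : ((size R).-1 <= \sum_i s i)%N.
    by apply: leq_trans Rs _; rewrite leq_eqVlt; apply/orP; left; apply/eqP;
      apply: eq_bigr => k _; rewrite Psz.
  split; first by exists R; split => // X /imfsetP [/= k _ ->].
  have lu : lead_coef R \is a GRing.unit by apply: hF; rewrite lead_coef_eq0.
  have reg : GRing.lreg (lead_coef R)^-1 by apply: mulrI; rewrite unitrV.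
  exists ((lead_coef R)^-1 *: R); split; last first.
    rewrite (@sum_inj _ _ _ _ (B s hs)) lreg_size //.
    have -> : (\sum_i (size (P s i)).-1 = \sum_i s i)%N by apply: eq_bigr => k _; rewrite Psz.
    lia.
  split.
  - by rewrite monicE lead_coef_lreg // mulVr.
  - move=> X /imfsetP [/= k _ ->]; have [S e] := hR k.
    by exists ((lead_coef R)^-1 *: S); rewrite skmulZl -e.
  - move=> Q Qn HQ; rewrite lreg_size //.
    have hQ : forall k, skrdvd sigma delta (P s k) Q by move=> k; apply: HQ; apply/imfsetP; exists k.
    have := A s hs Q Qn hQ.
    move: Rs' lo; rewrite -!size_poly_gt0 in Rn Qn; lia.
pose s1 := fun _ : 'I_n => 1%N.
have hs1 : forall i, (0 < s1 i <= r i)%N by move=> i; rewrite /s1 hr.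
have e1 : forall i, P s1 i = 'X - (a i)%:P by move=> i; rewrite /P /s1 /skexp /= skmulr1.
have inja : injective a.
  by move=> i j e; apply: (B s1 hs1); rewrite !e1 e.
split; first by move=> s hs; exact: C s hs.
split; first by apply: card_inj2.
rewrite /Pindependent_elts.
have -> : [fset 'X - b%:P | b in [fset a i | i : 'I_n]]%fset = [fset P s1 i | i : 'I_n]%fset.
  apply/fsetP => x; apply/imfsetP/imfsetP => [[/= b /imfsetP [/= i _ ->] ->]|[/= i _ ->]].
    by exists i => //; rewrite e1.
  by exists (a i); [rewrite in_imfset | rewrite e1].
exact: C s1 hs1.
Qed.

End Skew.

Theorem mainTheorem5 (F : unitRingType) (hF : is_division_ring F)
  (sigma : {rmorphism F -> F}) (delta : F -> F)
  (hdelta : is_sigma_derivation sigma delta)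
  (n : nat) (a : 'I_n -> F) (r : 'I_n -> nat) (hr : forall i, (0 < r i)%N)
  (hsize : #|` [fset skexp sigma delta ('X - (a i)%:P) (r i) | i : 'I_n]%fset | = n) :
  Pindependent sigma delta [fset skexp sigma delta ('X - (a i)%:P) (r i) | i : 'I_n]%fset ->
  (forall s : 'I_n -> nat, (forall i, 0 < s i <= r i)%N ->
     Pindependent sigma delta [fset skexp sigma delta ('X - (a i)%:P) (s i) | i : 'I_n]%fset)
  /\
  (#|` [fset a i | i : 'I_n]%fset | = n /\
   Pindependent_elts sigma delta [fset a i | i : 'I_n]%fset).
Proof. exact: (@main_sec F hF sigma delta hdelta n a r hr hsize). Qed.
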